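(* Let $G$ be a bipartite graph of boxicity $b$. Then $G$ belongs to $(b+1)$-CBU.
   Context: Let $e_1,\ldots,e_d$ be the standard orthogonal basis of $\mathbb{R}^d$. An axis-parallel box in $\mathbb{R}^d$ is a product $I_1\times\cdots\times I_d$ of closed intervals of positive length. For $d\ge 1$, a graph $G$ belongs to $d$-CBU if one can assign to each vertex an axis-parallel box in $\mathbb{R}^d$ such that the boxes have pairwise disjoint interiors, two distinct vertices are adjacent if and only if their boxes intersect, and any two intersecting boxes intersect in a $(d-1)$-dimensional box orthogonal to $e_1$ (i.e. lying in a hyperplane orthogonal to $e_1$). The boxicity of a graph is the minimum dimension $b$ such that the graph is the intersection graph of axis-parallel boxes in $\mathbb{R}^b$. *)

(* Defs.v *)
From mathcomp Require Import all_boot all_order all_algebra.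
From mathcomp Require Import reals.
Set Implicit Arguments. Unset Strict Implicit. Unset Printing Implicit Defensive.
Import Order.TTheory GRing.Theory Num.Theory.
Local Open Scope ring_scope.

Definition simple_graph (T : finType) (e : rel T) : Prop :=
  (forall u v, e u v = e v u) /\ (forall u, ~~ e u u).

Definition bipartite (T : finType) (e : rel T) : Prop :=
  exists c : T -> bool, forall u v, e u v -> c u != c v.

Record boxes (R : realType) (T : finType) (d : nat) := Boxes {
  lo : T -> 'I_d -> R;
  hi : T -> 'I_d -> R;
  lo_lt_hi : forall v i, lo v i < hi v i }.

Definition box_meet (R : realType) (T : finType) (d : nat) (B : boxes R T d)
  (u v : T) : Prop :=
  forall i : 'I_d, lo B u i <= hi B v i /\ lo B v i <= hi B u i.

Definition interiors_disjoint (R : realType) (T : finType) (d : nat)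
  (B : boxes R T d) (u v : T) : Prop :=
  exists i : 'I_d, hi B u i <= lo B v i \/ hi B v i <= lo B u i.

Definition box_representation (R : realType) (T : finType) (e : rel T)
  (d : nat) (B : boxes R T d) : Prop :=
  forall u v, u != v -> (e u v <-> box_meet B u v).

Definition has_boxicity (R : realType) (T : finType) (e : rel T) (b : nat) : Prop :=
  (exists B : boxes R T b, box_representation e B) /\
  (forall (b' : nat) (B : boxes R T b'), box_representation e B -> (b <= b')%N).

(* The intersection of boxes u and v (assumed to meet) is a (d-1)-dimensional
   box lying in a hyperplane orthogonal to e_1 (coordinate ord0): it is a
   single point in coordinate 0 and has positive length in all others. *)
Definition meet_orth_e1 (R : realType) (T : finType) (d : nat)
  (B : boxes R T d.+1) (u v : T) : Prop :=
  Num.max (lo B u ord0) (lo B v ord0) = Num.min (hi B u ord0) (hi B v ord0) /\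
  (forall i : 'I_d.+1, i != ord0 ->
     Num.max (lo B u i) (lo B v i) < Num.min (hi B u i) (hi B v i)).

(* G belongs to (d+1)-CBU (the dimension d.+1 is >= 1). *)
Definition in_CBU (R : realType) (T : finType) (e : rel T) (d : nat) : Prop :=
  exists B : boxes R T d.+1,
    (forall u v, u != v -> interiors_disjoint B u v) /\
    box_representation e B /\
    (forall u v, u != v -> box_meet B u v -> meet_orth_e1 B u v).

(* Main.v *)
Require Import Defs.
From mathcomp Require Import all_boot all_order all_algebra.
From mathcomp Require Import reals.
From mathcomp Require Import lra.
From Stdlib Require Import Classical.
Set Implicit Arguments. Unset Strict Implicit. Unset Printing Implicit Defensive.
Import Order.TTheory GRing.Theory Num.Theory.
Local Open Scope ring_scope.

Lemma fin_pos_min (R : realType) (X : finType) (P : X -> bool) (f : X -> R) :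
  (forall x, P x -> 0 < f x) -> exists d : R, 0 < d /\ forall x, P x -> d <= f x.
Proof.
move=> Hf.
suff: forall s : seq X, exists d : R, 0 < d /\ forall x, x \in s -> P x -> d <= f x.
  move=> /(_ (enum X)) [d [d0 Hd]]; exists d; split=> // x Px.
  by apply: Hd => //; rewrite mem_enum.
elim=> [|y s [d [d0 Hd]]]; first by exists 1; split=> //.
exists (Num.min d (if P y then f y else 1)); split.
  by rewrite lt_min d0 /=; case: ifP => // Py; apply: Hf.
move=> x; rewrite in_cons => /orP [/eqP -> | xs] Px.
  by rewrite ge_min Px lexx orbT.
by rewrite ge_min Hd.
Qed.

Lemma nomeet_gap (R : realType) (T : finType) (d : nat) (B : boxes R T d) u v :
  ~ box_meet B u v -> exists i, hi B u i < lo B v i \/ hi B v i < lo B u i.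
Proof.
move=> H; apply: NNPP => H2; apply: H => i.
have {}H2 := not_ex_all_not _ _ H2 i.
split; rewrite leNgt; apply/negP => Hl; apply: H2; [right|left] => //.
Qed.

Theorem mainTheorem1 (R : realType) (T : finType) (e : rel T) (b : nat) :
  simple_graph e -> bipartite e -> has_boxicity R e b -> in_CBU R e b.
Proof.
move=> _ [c Hc] [[B HB] _].
have [d [d0 Hd]] := fin_pos_min (P := fun x : T * T * 'I_b => hi B x.1.1 x.2 < lo B x.1.2 x.2)
  (f := fun x : T * T * 'I_b => lo B x.1.2 x.2 - hi B x.1.1 x.2)
  (fun x H => ltac:(rewrite subr_gt0; exact H)).
pose dl := d / 3.
have dl0 : 0 < dl by rewrite /dl; lra.
have gap : forall u v i, hi B u i < lo B v i -> hi B u i + dl < lo B v i - dl.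
  move=> u v i H; have := Hd (u, v, i) H; rewrite /= /dl; lra.
pose lo' v (j : 'I_b.+1) :=
  if unlift ord0 j is Some i then lo B v i - dl else (if c v then 1 else 0).
pose hi' v (j : 'I_b.+1) :=
  if unlift ord0 j is Some i then hi B v i + dl else (if c v then 2 else 1).
have lh : forall v j, lo' v j < hi' v j.
  move=> v j; rewrite /lo' /hi'; case: (unlift ord0 j) => [i|].
    have := lo_lt_hi B v i; lra.
  by case: (c v); lra.
pose B' := Boxes lh.
have samecol : forall u v, u != v -> c u = c v -> ~ e u v.
  by move=> u v _ cuv euv; have := Hc u v euv; rewrite cuv eqxx.
have notmeet : forall u v, u != v -> ~ e u v -> ~ box_meet B' u v.
  move=> u v uv nuv Hm.
  have [i Hi] : exists i, hi B u i < lo B v i \/ hi B v i < lo B u i.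
    by apply: nomeet_gap => H; apply: nuv; apply/(HB u v uv).
  have [H1 H2] := Hm (lift ord0 i); move: H1 H2; rewrite /= /lo' /hi' liftK.
  by case: Hi => /gap; lra.
have meet : forall u v, u != v -> box_meet B' u v -> e u v.
  move=> u v uv Hm; apply: NNPP => nuv; exact: notmeet u v uv nuv Hm.
have Hc' : forall u v, u != v -> box_meet B' u v -> c u != c v.
  by move=> u v uv Hm; apply: Hc; apply: meet.
exists B'; split; [|split].
- move=> u v uv.
  case: (boolP (c u == c v)) => [/eqP cuv | cuv].
    have nuv := samecol u v uv cuv.
    have [i Hi] : exists i, hi B u i < lo B v i \/ hi B v i < lo B u i.
      by apply: nomeet_gap => H; apply: nuv; apply/(HB u v uv).
    exists (lift ord0 i); rewrite /= /lo' /hi' liftK.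
    by case: Hi => /gap H; [left|right]; lra.
  exists ord0; rewrite /= /lo' /hi' unlift_none.
  by move: cuv; case: (c u); case: (c v) => //= _; [right|left]; lra.
- move=> u v uv; split; last exact: meet u v uv.
  move=> euv; have Hm := (HB u v uv).1 euv.
  have cuv := Hc u v euv.
  move=> j; rewrite /= /lo' /hi'; case: (unliftP ord0 j) => [i _|_].
    have [H1 H2] := Hm i; lra.
  by move: cuv; case: (c u); case: (c v) => //= _; lra.
- move=> u v uv Hm.
  have cuv := Hc' u v uv Hm.
  have Hm0 := (HB u v uv).1 (meet u v uv Hm).
  split.
    rewrite /= /lo' /hi' unlift_none.
    move: cuv; case: (c u); case: (c v) => //= _.
      by rewrite max_l ?min_r //; lra.
    by rewrite max_r ?min_l //; lra.
  move=> j j0; rewrite /= /lo' /hi'; case: (unliftP ord0 j) => [i _|Hj].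
    have [H1 H2] := Hm0 i; have H3 := lo_lt_hi B u i; have H4 := lo_lt_hi B v i.
    rewrite lt_min !gt_max; apply/andP; split; apply/andP; split; lra.
  by rewrite Hj eqxx in j0.
Qed.
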